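(* Let $\mathbb{K}$ be a field, $C$ a coseparable coalgebra, and $P_e(B,C,\psi)$ an $e$-copointed $(P,C)_\psi$-extension with bijective entwining map $\psi$. If there exists a colifting of the translation map $\tilde\tau:C\to P\otimes P$, then the canonical map $\mathrm{can}:P\otimes_BP\to P\otimes C$ is bijective and $P^C_e(B)$ is a principal $C$-coalgebra Galois extension.
   Context: A coalgebra $C$ is coseparable if there is a $(C,C)$-bicolinear map $\delta:C\otimes C\to C$ with $\delta\circ\Delta=\mathrm{id}_C$. An entwining structure $(P,C)_\psi$: algebra $P$, coalgebra $C$, linear $\psi:C\otimes P\to P\otimes C$, $\psi(c\otimes p)=p_\alpha\otimes c^\alpha$, with $\psi(c\otimes pq)=p_\alpha q_\beta\otimes c^{\alpha\beta}$, $\psi(c\otimes1)=1\otimes c$, $p_\alpha\otimes c^\alpha{}_{(1)}\otimes c^\alpha{}_{(2)}=p_{\alpha\beta}\otimes c_{(1)}{}^\beta\otimes c_{(2)}{}^\alpha$, $p_\alpha\varepsilon(c^\alpha)=\varepsilon(c)p$. $P(B,C,\psi)$ (a $(P,C)_\psi$-extension) means $P$ has a right $C$-coaction $\rho^C(p)=p_{(0)}\otimes p_{(1)}$ with $\rho^C(pq)=p_{(0)}\psi(p_{(1)}\otimes q)$ and $B=P^{\mathrm{co}C}=\{b:\rho^C(bp)=b\rho^C(p)\ \forall p\}$; it is $e$-copointed, for a grouplike $e\in C$, if $\rho^C(p)=\psi(e\otimes p)$ for all $p$. The canonical map is $p\otimes_Bp'\mapsto pp'_{(0)}\otimes p'_{(1)}$;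 a colifting of the translation map is a linear $\tilde\tau:C\to P\otimes P$, $c\mapsto c^{\tilde{[1]}}\otimes c^{\tilde{[2]}}$, with $c^{\tilde{[1]}}c^{\tilde{[2]}}{}_{(0)}\otimes c^{\tilde{[2]}}{}_{(1)}=1_P\otimes c$. Writing $\psi^{-1}$ for the inverse, the left $C$-coaction induced by $\psi$ is ${}^{C_\psi}\rho(p)=\psi^{-1}(p\otimes e)$. A strong connection form is a linear $\ell:C\to P\otimes P$ with $\ell(e)=1\otimes1$, $\widetilde{\mathrm{can}}(\ell(c))=1\otimes c$ (where $\widetilde{\mathrm{can}}(p\otimes p')=pp'_{(0)}\otimes p'_{(1)}$), $(P\otimes\rho^C)\circ\ell=(\ell\otimes C)\circ\Delta$ and $({}^{C_\psi}\rho\otimes P)\circ\ell=(C\otimes\ell)\circ\Delta$. An $e$-copointed $C$-coalgebra Galois extension $P^C_e(B)$ (canonical map bijective) is principal if the canonical entwining $\psi_{\mathrm{can}}(c\otimes p)=\mathrm{can}(\mathrm{can}^{-1}(1\otimes c)p)$ is bijective and a strong connection form exists. *)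

(* Defs.v *)
(* Abstract (possibly infinite-dimensional) vector spaces over a
   field K are [lmodType K]; tensor products are given by their universal property. *)
From HB Require Import structures.
From mathcomp Require Import all_boot all_algebra.
From Stdlib Require Import ClassicalEpsilon.
Unset Printing Implicit Defensive.
Import GRing.Theory.
Local Open Scope ring_scope.

Definition bilinear_map {K : fieldType} {U V W : lmodType K} (f : U -> V -> W) : Prop :=
  (forall u, linear (f u)) /\ (forall v, linear (fun u => f u v)).

Record tensor {K : fieldType} (U V : lmodType K) := Tensor {
  tsp :> lmodType K;
  tens : U -> V -> tsp;
  tens_bilin : bilinear_map tens;
  tens_ex : forall (W : lmodType K) (f : U -> V -> W), bilinear_map f ->
    exists g : tsp -> W, linear g /\ forall u v, g (tens u v) = f u v;
  tens_uniq : forall (W : lmodType K) (g h : tsp -> W), linear g -> linear h ->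
    (forall u v, g (tens u v) = h (tens u v)) -> g =1 h }.

Record btensor {K : fieldType} {P : algType K} (B : P -> Prop) := BTensor {
  bsp :> lmodType K;
  btens : P -> P -> bsp;
  btens_bilin : bilinear_map btens;
  btens_bal : forall p b q, B b -> btens (p * b) q = btens p (b * q);
  btens_ex : forall (W : lmodType K) (f : P -> P -> W), bilinear_map f ->
    (forall p b q, B b -> f (p * b) q = f p (b * q)) ->
    exists g : bsp -> W, linear g /\ forall p q, g (btens p q) = f p q;
  btens_uniq : forall (W : lmodType K) (g h : bsp -> W), linear g -> linear h ->
    (forall p q, g (btens p q) = h (btens p q)) -> g =1 h }.

Arguments tsp {K U V} _.
Arguments tens {K U V} _ _ _.
Arguments Tensor {K U V} _ _ _ _ _.
Arguments bsp {K P B} _.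
Arguments btens {K P B} _ _ _.

(* The linear map U (x) V -> W induced by a bilinear f (chosen by the universal
   property; meaningful whenever f is bilinear). *)
Definition tlift {K : fieldType} {U V : lmodType K} (T : tensor U V) {W : lmodType K}
  (f : U -> V -> W) : tsp T -> W :=
  epsilon (inhabits (fun _ => 0))
    (fun g : tsp T -> W => linear g /\ forall u v, g (tens T u v) = f u v).

Definition btlift {K : fieldType} {P : algType K} {B : P -> Prop} (T : btensor B)
  {W : lmodType K} (f : P -> P -> W) : bsp T -> W :=
  epsilon (inhabits (fun _ => 0))
    (fun g : bsp T -> W => linear g /\ forall p q, g (btens T p q) = f p q).

Definition lmulT {K : fieldType} {P : algType K} {C : lmodType K} (PC : tensor P C)
  (p0 : P) : tsp PC -> tsp PC :=
  tlift PC (fun r d => tens PC (p0 * r) d).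

(* (C, Delta, eps) is a coalgebra; CCC models C (x) (C (x) C). *)
Definition is_coalgebra {K : fieldType} {C : lmodType K} (CC : tensor C C)
  (CCC : tensor C CC) (Delta : C -> CC) (eps : C -> K^o) : Prop :=
  [/\ linear Delta, linear eps,
   (* (id (x) Delta) o Delta = (Delta (x) id) o Delta, up to associativity *)
   forall c, tlift CC (fun a b => tens CCC a (Delta b)) (Delta c) =
             tlift CC (fun a b => tlift CC (fun x y => tens CCC x (tens CC y b)) (Delta a))
                   (Delta c),
   forall c, tlift CC (fun a b => eps a *: b) (Delta c) = c &
   forall c, tlift CC (fun a b => eps b *: a) (Delta c) = c].

(* Left colinearity:  Delta (delta (c (x) d)) = c_(1) (x) delta (c_(2) (x) d);
   right colinearity: Delta (delta (c (x) d)) = delta (c (x) d_(1)) (x) d_(2). *)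
Definition coseparable {K : fieldType} {C : lmodType K} (CC : tensor C C)
  (Delta : C -> CC) : Prop :=
  exists delta : tsp CC -> C,
  [/\ linear delta,
   forall c d, Delta (delta (tens CC c d)) =
               tlift CC (fun a b => tens CC a (delta (tens CC b d))) (Delta c),
   forall c d, Delta (delta (tens CC c d)) =
               tlift CC (fun a b => tens CC (delta (tens CC c a)) b) (Delta d) &
   forall c, delta (Delta c) = c].

Definition grouplike {K : fieldType} {C : lmodType K} (CC : tensor C C)
  (Delta : C -> CC) (eps : C -> K^o) (e : C) : Prop :=
  Delta e = tens CC e e /\ eps e = 1.

(* (P, C)_psi is an entwining structure; PCC models P (x) (C (x) C). *)
Definition is_entwining {K : fieldType} {P : algType K} {C : lmodType K}
  (CC : tensor C C) (PCC : tensor P CC) (CP : tensor C P) (PC : tensor P C)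
  (Delta : C -> CC) (eps : C -> K^o) (psi : tsp CP -> tsp PC) : Prop :=
  [/\ linear psi,
   (* psi(c (x) pq) = p_a q_b (x) c^{ab} *)
   forall c p q, psi (tens CP c (p * q)) =
     tlift PC (fun pa ca => lmulT PC pa (psi (tens CP ca q))) (psi (tens CP c p)),
   forall c, psi (tens CP c 1) = tens PC 1 c,
   (* p_a (x) c^a_(1) (x) c^a_(2) = p_{ab} (x) c_(1)^b (x) c_(2)^a *)
   forall c p, tlift PC (fun pa ca => tens PCC pa (Delta ca)) (psi (tens CP c p)) =
     tlift CC (fun c1 c2 =>
       tlift PC (fun pa ca =>
         tlift PC (fun pab cb => tens PCC pab (tens CC cb ca)) (psi (tens CP c1 pa)))
         (psi (tens CP c2 p))) (Delta c) &
   (* p_a eps(c^a) = eps(c) p *)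
   forall c p, tlift PC (fun pa ca => eps ca *: pa) (psi (tens CP c p)) = eps c *: p].

(* rho is a right C-coaction on P with rho(pq) = p_(0) psi(p_(1) (x) q). *)
Definition is_entwined_coaction {K : fieldType} {P : algType K} {C : lmodType K}
  (CC : tensor C C) (PCC : tensor P CC) (CP : tensor C P) (PC : tensor P C)
  (Delta : C -> CC) (eps : C -> K^o) (psi : tsp CP -> tsp PC) (rho : P -> tsp PC) : Prop :=
  [/\ linear rho,
   forall p, tlift PC (fun p0 p1 => tlift PC (fun a b => tens PCC a (tens CC b p1)) (rho p0))
                   (rho p) =
             tlift PC (fun p0 p1 => tens PCC p0 (Delta p1)) (rho p),
   forall p, tlift PC (fun p0 p1 => eps p1 *: p0) (rho p) = p &
   forall p q, rho (p * q) = tlift PC (fun p0 p1 => lmulT PC p0 (psi (tens CP p1 q))) (rho p)].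

Definition coinv {K : fieldType} {P : algType K} {C : lmodType K} (PC : tensor P C)
  (rho : P -> tsp PC) (b : P) : Prop :=
  forall p, rho (b * p) = lmulT PC b (rho p).

Definition copointed {K : fieldType} {P : algType K} {C : lmodType K}
  (CP : tensor C P) (PC : tensor P C) (psi : tsp CP -> tsp PC) (rho : P -> tsp PC)
  (e : C) : Prop :=
  forall p, rho p = psi (tens CP e p).

Definition cantilde {K : fieldType} {P : algType K} {C : lmodType K} (PP : tensor P P)
  (PC : tensor P C) (rho : P -> tsp PC) : tsp PP -> tsp PC :=
  tlift PP (fun p p' => lmulT PC p (rho p')).

Definition can {K : fieldType} {P : algType K} {C : lmodType K} {B : P -> Prop}
  (PBP : btensor B) (PC : tensor P C) (rho : P -> tsp PC) : bsp PBP -> tsp PC :=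
  btlift PBP (fun p p' => lmulT PC p (rho p')).

Definition colifting {K : fieldType} {P : algType K} {C : lmodType K} (PP : tensor P P)
  (PC : tensor P C) (rho : P -> tsp PC) (tau : C -> tsp PP) : Prop :=
  linear tau /\ forall c, cantilde PP PC rho (tau c) = tens PC 1 c.

Definition brmul {K : fieldType} {P : algType K} {B : P -> Prop} (PBP : btensor B)
  (p : P) : bsp PBP -> bsp PBP :=
  btlift PBP (fun a b => btens PBP a (b * p)).

Definition psi_can {K : fieldType} {P : algType K} {C : lmodType K} {B : P -> Prop}
  (PBP : btensor B) (CP : tensor C P) (PC : tensor P C) (rho : P -> tsp PC)
  (canInv : tsp PC -> bsp PBP) : tsp CP -> tsp PC :=
  tlift CP (fun c p => can PBP PC rho (brmul PBP p (canInv (tens PC 1 c)))).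

(* strong connection form, relative to the inverse psiinv of the entwining;
   PPC models P (x) (P (x) C), CPP models C (x) (P (x) P). *)
Definition strong_connection {K : fieldType} {P : algType K} {C : lmodType K}
  (CC : tensor C C) (PP : tensor P P) (PC : tensor P C) (CP : tensor C P)
  (PPC : tensor P PC) (CPP : tensor C PP) (Delta : C -> CC) (rho : P -> tsp PC)
  (e : C) (psiinv : tsp PC -> tsp CP) (l : C -> tsp PP) : Prop :=
  [/\ linear l,
   l e = tens PP 1 1,
   forall c, cantilde PP PC rho (l c) = tens PC 1 c,
   (* (P (x) rho) o l = (l (x) C) o Delta *)
   forall c, tlift PP (fun a b => tens PPC a (rho b)) (l c) =
     tlift CC (fun c1 c2 => tlift PP (fun a b => tens PPC a (tens PC b c2)) (l c1)) (Delta c) &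
   (* (^{C_psi}rho (x) P) o l = (C (x) l) o Delta, with ^{C_psi}rho(p) = psi^{-1}(p (x) e) *)
   forall c, tlift PP (fun a b =>
       tlift CP (fun c' a' => tens CPP c' (tens PP a' b)) (psiinv (tens PC a e))) (l c) =
     tlift CC (fun c1 c2 => tens CPP c1 (l c2)) (Delta c)].

Definition principal {K : fieldType} {P : algType K} {C : lmodType K}
  (CC : tensor C C) (PP : tensor P P) (PC : tensor P C) (CP : tensor C P)
  (PPC : tensor P PC) (CPP : tensor C PP) {B : P -> Prop} (PBP : btensor B)
  (Delta : C -> CC) (rho : P -> tsp PC) (e : C) : Prop :=
  exists canInv : tsp PC -> bsp PBP,
  [/\ cancel (can PBP PC rho) canInv, cancel canInv (can PBP PC rho),
      copointed CP PC (psi_can PBP CP PC rho canInv) rho e &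
      exists psiinv : tsp PC -> tsp CP,
      [/\ cancel (psi_can PBP CP PC rho canInv) psiinv,
          cancel psiinv (psi_can PBP CP PC rho canInv) &
          exists l : C -> tsp PP, strong_connection CC PP PC CP PPC CPP Delta rho e psiinv l]].

(* Main.v *)
Require Import Defs.
From mathcomp Require Import all_boot all_algebra.
From Stdlib Require Import ClassicalEpsilon FunctionalExtensionality.
Import GRing.Theory.
Local Open Scope ring_scope.

Section Lin.
Context {K : fieldType}.

Lemma linD {U V : lmodType K} {f : U -> V} : linear f -> forall x y, f (x + y) = f x + f y.
Proof. by move=> H x y; have := H 1 x y; rewrite !scale1r. Qed.
Lemma lin0 {U V : lmodType K} {f : U -> V} : linear f -> f 0 = 0.
Proof. move=> H; have := linD H 0 0; rewrite addr0 => /(congr1 (fun z => z - f 0)); rewrite subrr addrK; by move=> <-. Qed.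
Lemma linZ {U V : lmodType K} {f : U -> V} : linear f -> forall a x, f (a *: x) = a *: f x.
Proof. by move=> H a x; rewrite -[a *: x]addr0 H lin0 // addr0. Qed.

Lemma linN {U V : lmodType K} {f : U -> V} : linear f -> forall x, f (- x) = - f x.
Proof. by move=> H x; rewrite -scaleN1r linZ // scaleN1r. Qed.
Lemma linB {U V : lmodType K} {f : U -> V} : linear f -> forall x y, f (x - y) = f x - f y.
Proof. by move=> H x y; rewrite linD // linN. Qed.
Lemma lin_id {U : lmodType K} : linear (fun x : U => x).
Proof. by []. Qed.
Lemma lin_comp {U V W : lmodType K} {g : V -> W} {h : U -> V} :
  linear g -> linear h -> linear (fun x => g (h x)).
Proof. by move=> Hg Hh a x y; rewrite Hh Hg. Qed.
Lemma lin_add {U V : lmodType K} {g h : U -> V} :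
  linear g -> linear h -> linear (fun x => g x + h x).
Proof.
move=> Hg Hh a x y; rewrite Hg Hh scalerDr.
by rewrite -!addrA; congr (_ + _); rewrite addrCA.
Qed.
Lemma lin_scale {U V : lmodType K} (k : K) {h : U -> V} :
  linear h -> linear (fun x => k *: h x).
Proof. by move=> Hh a x y; rewrite Hh scalerDr !scalerA mulrC. Qed.
Lemma lin_scalel {U V : lmodType K} (v : V) {h : U -> K^o} :
  linear h -> linear (fun x => (h x : K) *: v).
Proof. by move=> Hh a x y; rewrite Hh scalerDl scalerA. Qed.
Lemma lin_mull {P : algType K} {U : lmodType K} (q : P) {h : U -> P} :
  linear h -> linear (fun x => h x * q).
Proof. by move=> Hh a x y; rewrite Hh mulrDl scalerAl. Qed.
Lemma lin_mulr {P : algType K} {U : lmodType K} (q : P) {h : U -> P} :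
  linear h -> linear (fun x => q * h x).
Proof. by move=> Hh a x y; rewrite Hh mulrDr scalerAr. Qed.
End Lin.

Section Tens.
Context {K : fieldType} {U V : lmodType K} (T : tensor U V).

Lemma tlift_spec {W : lmodType K} {f : U -> V -> W} : bilinear_map f ->
  linear (tlift T f) /\ forall u v, tlift T f (tens T u v) = f u v.
Proof.
move=> Hf; rewrite /tlift; case: (@tens_ex _ _ _ T _ _ Hf) => g Hg.
exact: (@epsilon_spec _ (inhabits (fun _ : tsp T => (0 : W))) (fun g0 : tsp T -> W => linear g0 /\ forall u v, g0 (tens T u v) = f u v) (ex_intro _ g Hg)).
Qed.
Lemma lin_tlift {W : lmodType K} {f : U -> V -> W} : bilinear_map f -> linear (tlift T f).
Proof. by case/tlift_spec. Qed.
Lemma tlift_tens {W : lmodType K} {f : U -> V -> W} u v : bilinear_map f ->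
  tlift T f (tens T u v) = f u v.
Proof. by case/tlift_spec => _ ->. Qed.
Lemma tuniq {W : lmodType K} {g h : tsp T -> W} : linear g -> linear h ->
  (forall u v, g (tens T u v) = h (tens T u v)) -> forall x, g x = h x.
Proof. exact: (@tens_uniq _ _ _ T). Qed.
Lemma lin_tens_l v : linear (fun u => tens T u v).
Proof. by case: (@tens_bilin _ _ _ T) => _ H; apply: H. Qed.
Lemma lin_tens_r u : linear (tens T u).
Proof. by case: (@tens_bilin _ _ _ T) => H _; apply: H. Qed.
Lemma tens_bil : bilinear_map (tens T).
Proof. exact: (@tens_bilin _ _ _ T). Qed.
Lemma tlift_eq {W : lmodType K} {f g : U -> V -> W} :
  (forall u v, f u v = g u v) -> tlift T f = tlift T g.
Proof.
move=> H; have -> // : f = g.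
by apply: functional_extensionality => u; apply: functional_extensionality => v.
Qed.
Lemma tlift_self {W : lmodType K} {G : tsp T -> W} : linear G ->
  forall x, tlift T (fun u v => G (tens T u v)) x = G x.
Proof.
move=> HG; have Hb : bilinear_map (fun u v => G (tens T u v)).
  by split=> [u|v]; apply: lin_comp => //; [apply: lin_tens_r | apply: lin_tens_l].
by apply: tuniq => //; [apply: lin_tlift | move=> u v; rewrite tlift_tens].
Qed.
Lemma tlift_comp {W W' : lmodType K} {f : U -> V -> W} {G : W -> W'} :
  bilinear_map f -> linear G ->
  forall x, G (tlift T f x) = tlift T (fun u v => G (f u v)) x.
Proof.
move=> Hf HG; have Hb : bilinear_map (fun u v => G (f u v)).
  by case: Hf => H1 H2; split=> [u|v]; apply: lin_comp.
apply: tuniq.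
- by apply: lin_comp => //; apply: lin_tlift.
- by apply: lin_tlift.
by move=> u v; rewrite !tlift_tens.
Qed.
Lemma lin_tlift_param {X W : lmodType K} {F : X -> U -> V -> W} y :
  (forall x, bilinear_map (F x)) -> (forall u v, linear (fun x => F x u v)) ->
  linear (fun x => tlift T (F x) y).
Proof.
move=> Hb Hl a x1 x2.
pose h := fun z => a *: tlift T (F x1) z + tlift T (F x2) z.
have Hh : linear h by apply: lin_add; [apply: lin_scale|]; apply: lin_tlift.
have := @tuniq _ (tlift T (F (a *: x1 + x2))) h (lin_tlift (Hb _)) Hh.
apply=> u v; rewrite /h !tlift_tens //; exact: Hl.
Qed.
Lemma lin_tlift_arg {X W : lmodType K} {f : U -> V -> W} {h : X -> tsp T} :
  bilinear_map f -> linear h -> linear (fun x => tlift T f (h x)).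
Proof. by move=> Hf Hh; apply: lin_comp => //; apply: lin_tlift. Qed.
End Tens.

Lemma lin_tensl_c {K : fieldType} {U V X : lmodType K} (T : tensor U V) v (h : X -> U) :
  linear h -> linear (fun x => tens T (h x) v).
Proof. move=> Hh; exact: (lin_comp (lin_tens_l T v) Hh). Qed.
Lemma lin_tensr_c {K : fieldType} {U V X : lmodType K} (T : tensor U V) u (h : X -> V) :
  linear h -> linear (fun x => tens T u (h x)).
Proof. move=> Hh; exact: (lin_comp (lin_tens_r T u) Hh). Qed.
Lemma lin_app1 {K : fieldType} {A B X W : lmodType K} (F : A -> B -> W) y (h : X -> A) :
  linear (fun z => F z y) -> linear h -> linear (fun x => F (h x) y).
Proof. move=> H1 H2; exact: (lin_comp H1 H2). Qed.
Lemma lin_mulr1 {K : fieldType} {P : algType K} (q : P) : linear ( *%R q).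
Proof. exact: (lin_mulr q lin_id). Qed.
Lemma lin_mull1 {K : fieldType} {P : algType K} (q : P) : linear (fun x : P => x * q).
Proof. exact: (lin_mull q lin_id). Qed.
Lemma lin_scale1 {K : fieldType} {U : lmodType K} (k : K) : linear ( *:%R k : U -> U).
Proof. exact: (lin_scale k lin_id). Qed.
Create HintDb lindb.
Lemma lin_idf {K : fieldType} {U : lmodType K} : linear (@id U).
Proof. by []. Qed.
#[export] Hint Resolve lin_idf lin_mulr1 lin_mull1 lin_scale1 lin_tens_r lin_tens_l lin_id : lindb.

Ltac lin_extra := fail.
Ltac lin_hook := fail.
Ltac lin_base := solve [ assumption | match goal with H : forall _, _ |- _ => apply: H end | apply: lin_idf | apply: lin_id | apply: lin_mulr1 | apply: lin_mull1
  | apply: lin_scale1 | apply: lin_tens_r | apply: lin_tens_l | lin_extra ].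
Ltac lin := first [lin_base | cbv beta; match goal with
 | |- GRing.linear_for _ (fun x => x) => apply: lin_id
 | |- GRing.linear_for _ (tlift _ _) => apply: lin_tlift; bil
 | |- GRing.linear_for _ (fun x => tlift ?T _ _) =>
     first [ apply: lin_tlift_arg; [bil | lin]
           | apply: lin_tlift_param; [intro; bil | intros; lin] ]
 | |- GRing.linear_for _ (fun x => _ + _) => apply: lin_add; lin
 | |- GRing.linear_for _ (fun x => tens _ _ _) =>
     first [ apply: lin_tensr_c; lin
           | apply: lin_tensl_c; lin ]
 | |- GRing.linear_for _ (fun x => _ * _) =>
     first [ apply: lin_mulr; lin | apply: lin_mull; lin ]
 | |- GRing.linear_for _ (fun x => _ *: _) =>
     first [ apply: lin_scale; lin | apply: lin_scalel; lin ]
 | |- GRing.linear_for _ (fun x => ?g _) =>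
     apply: (lin_comp (g := g)); [lin_base | lin]
 | _ => lin_hook
 | |- GRing.linear_for _ (fun x => _ _ _) => apply: lin_app1; [lin_base | lin]
 end]
with bil := cbv beta; split=> [?|?]; lin.

Lemma tlift_eqx {K : fieldType} {U V : lmodType K} (T : tensor U V) {W : lmodType K}
  (f g : U -> V -> W) x y :
  (forall u v, f u v = g u v) -> x = y -> tlift T f x = tlift T g y.
Proof. by move=> /tlift_eq -> ->. Qed.

Lemma tlift_swap {K : fieldType} {U1 V1 U2 V2 W : lmodType K} (T1 : tensor U1 V1) (T2 : tensor U2 V2)
  (F : U1 -> V1 -> U2 -> V2 -> W) x y :
  (forall a b, bilinear_map (F a b)) ->
  (forall b c d, linear (fun a => F a b c d)) ->
  (forall a c d, linear (fun b => F a b c d)) ->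
  tlift T1 (fun a b => tlift T2 (F a b) y) x = tlift T2 (fun c d => tlift T1 (fun a b => F a b c d) x) y.
Proof.
move=> HF H1 H2.
have Hb : forall c d, bilinear_map (fun a b => F a b c d).
  by move=> c d; split; [move=> a; exact: H2 | move=> b; exact: H1].
have Hb2 : bilinear_map (fun a b => tlift T2 (F a b) y).
  split=> [a|b]; apply: lin_tlift_param.
  - by move=> b; apply: HF.
  - by move=> u v; apply: H2.
  - by move=> a; apply: HF.
  - by move=> u v; apply: H1.
move: x; apply: tuniq.
- exact: lin_tlift.
- apply: lin_tlift_param; last by move=> c d; apply: lin_tlift.
  move=> x; split=> [c|d]; apply: lin_tlift_param => //.
  + by move=> a b; case: (HF a b) => Ha _; apply: Ha.
  + by move=> a b; case: (HF a b) => _ Ha; apply: Ha.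
move=> a b; rewrite tlift_tens //; congr (tlift T2 _ y).
by apply: functional_extensionality => c; apply: functional_extensionality => d; rewrite tlift_tens.
Qed.

Ltac tt := rewrite tlift_tens; [|bil].

Lemma tlift_scale {K : fieldType} {U V : lmodType K} (T : tensor U V) (k : K) x :
  tlift T (fun u v => k *: tens T u v) x = k *: x.
Proof.
move: x; apply: tuniq; first (apply: lin_tlift; bil); first lin.
by move=> u v; tt.
Qed.
Lemma tlift_id {K : fieldType} {U V : lmodType K} (T : tensor U V) x :
  tlift T (fun u v => tens T u v) x = x.
Proof.
move: x; apply: tuniq; first (apply: lin_tlift; bil); first lin.
by move=> u v; tt.
Qed.
Ltac introsx := repeat match goal with |- forall _, _ => intro end.
Ltac side := try solve [bil | lin | introsx; first [bil | lin]].

Section BT.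
Context {K : fieldType} {P : algType K} {B : P -> Prop} (T : btensor B).
Definition balanced {W : lmodType K} (f : P -> P -> W) := forall p b q, B b -> f (p * b) q = f p (b * q).
Lemma btlift_spec {W : lmodType K} {f : P -> P -> W} : bilinear_map f -> balanced f ->
  linear (btlift T f) /\ forall p q, btlift T f (btens T p q) = f p q.
Proof.
move=> Hf Hb; rewrite /btlift; case: (@btens_ex _ _ _ T _ _ Hf Hb) => g Hg.
exact: (@epsilon_spec _ (inhabits (fun _ : bsp T => (0 : W))) (fun g0 : bsp T -> W => linear g0 /\ forall p q, g0 (btens T p q) = f p q) (ex_intro _ g Hg)).
Qed.
Lemma btuniq {W : lmodType K} {g h : bsp T -> W} : linear g -> linear h ->
  (forall p q, g (btens T p q) = h (btens T p q)) -> forall x, g x = h x.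
Proof. exact: (@btens_uniq _ _ _ T). Qed.
Lemma lin_btens_l q : linear (fun p => btens T p q).
Proof. by case: (@btens_bilin _ _ _ T) => _ H; apply: H. Qed.
Lemma lin_btens_r p : linear (btens T p).
Proof. by case: (@btens_bilin _ _ _ T) => H _; apply: H. Qed.
Lemma btbal p b q : B b -> btens T (p * b) q = btens T p (b * q).
Proof. exact: (@btens_bal _ _ _ T). Qed.
Lemma lin_btensl_c {X : lmodType K} q (h : X -> P) : linear h -> linear (fun x => btens T (h x) q).
Proof. move=> Hh; exact: (lin_comp (lin_btens_l q) Hh). Qed.
Lemma lin_btensr_c {X : lmodType K} p (h : X -> P) : linear h -> linear (fun x => btens T p (h x)).
Proof. move=> Hh; exact: (lin_comp (lin_btens_r p) Hh). Qed.
Lemma lin_btlift_param {X W : lmodType K} {F : X -> P -> P -> W} y :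
  (forall x, bilinear_map (F x)) -> (forall x, balanced (F x)) ->
  (forall u v, linear (fun x => F x u v)) -> linear (fun x => btlift T (F x) y).
Proof.
move=> Hb Hbal Hl a x1 x2.
pose h := fun z => a *: btlift T (F x1) z + btlift T (F x2) z.
have L : forall x, linear (btlift T (F x)) by move=> x; case: (btlift_spec (Hb x) (Hbal x)).
have E : forall x p q, btlift T (F x) (btens T p q) = F x p q by move=> x; case: (btlift_spec (Hb x) (Hbal x)).
have Hh : linear h by apply: lin_add; [apply: lin_scale|]; apply: L.
have := @btuniq _ (btlift T (F (a *: x1 + x2))) h (L _) Hh.
apply=> u v; rewrite /h !E; exact: Hl.
Qed.
End BT.

Section Main.
Context (K : fieldType) (P : algType K) (C : lmodType K)
  (CC : tensor C C) (CCC : tensor C CC) (CP : tensor C P) (PC : tensor P C)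
  (PP : tensor P P) (PCC : tensor P CC) (PPC : tensor P PC) (CPP : tensor C PP)
  (Delta : C -> tsp CC) (eps : C -> K^o) (psi : tsp CP -> tsp PC) (rho : P -> tsp PC)
  (e : C) (PBP : btensor (coinv PC rho)).
Context (HDl : linear Delta) (Hel : linear eps)
  (Hcoass : forall c, tlift CC (fun a b => tens CCC a (Delta b)) (Delta c) =
             tlift CC (fun a b => tlift CC (fun x y => tens CCC x (tens CC y b)) (Delta a))
                   (Delta c))
  (Hcl : forall c, tlift CC (fun a b => eps a *: b) (Delta c) = c)
  (Hcr : forall c, tlift CC (fun a b => eps b *: a) (Delta c) = c).
Context (delta : tsp CC -> C) (Hdl : linear delta)
  (Hdleft : forall c d, Delta (delta (tens CC c d)) =
               tlift CC (fun a b => tens CC a (delta (tens CC b d))) (Delta c))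
  (Hdright : forall c d, Delta (delta (tens CC c d)) =
               tlift CC (fun a b => tens CC (delta (tens CC c a)) b) (Delta d))
  (HdD : forall c, delta (Delta c) = c).
Context (HDe : Delta e = tens CC e e) (Hee : eps e = 1).
Context (Hpl : linear psi)
  (HE1 : forall c p q, psi (tens CP c (p * q)) =
     tlift PC (fun pa ca => lmulT PC pa (psi (tens CP ca q))) (psi (tens CP c p)))
  (HE2 : forall c, psi (tens CP c 1) = tens PC 1 c)
  (HE3 : forall c p, tlift PC (fun pa ca => tens PCC pa (Delta ca)) (psi (tens CP c p)) =
     tlift CC (fun c1 c2 =>
       tlift PC (fun pa ca =>
         tlift PC (fun pab cb => tens PCC pab (tens CC cb ca)) (psi (tens CP c1 pa)))
         (psi (tens CP c2 p))) (Delta c))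
  (HE4 : forall c p, tlift PC (fun pa ca => eps ca *: pa) (psi (tens CP c p)) = eps c *: p).
Context (Hrl : linear rho)
  (Hrco : forall p, tlift PC (fun p0 p1 => tlift PC (fun a b => tens PCC a (tens CC b p1)) (rho p0))
                   (rho p) =
             tlift PC (fun p0 p1 => tens PCC p0 (Delta p1)) (rho p))
  (Hrcu : forall p, tlift PC (fun p0 p1 => eps p1 *: p0) (rho p) = p)
  (Hrm : forall p q, rho (p * q) = tlift PC (fun p0 p1 => lmulT PC p0 (psi (tens CP p1 q))) (rho p)).
Context (Hcop : forall p, rho p = psi (tens CP e p)).
Context (phi : tsp PC -> tsp CP) (Hpsiphi : cancel psi phi) (Hphipsi : cancel phi psi).
Context (tau : C -> tsp PP) (Htl : linear tau)
  (Htc : forall c, cantilde PP PC rho (tau c) = tens PC 1 c).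

Lemma Hphil : linear phi.
Proof. by move=> a x y; rewrite -{1}(Hphipsi x) -{1}(Hphipsi y) -Hpl Hpsiphi. Qed.



Lemma lmulT_lin p : linear (lmulT PC p).
Proof. rewrite /lmulT; apply: lin_tlift; bil. Qed.
Ltac lin_extra ::= first [apply: lmulT_lin | apply: Hphil].

Lemma lin_lmulT_l {X : lmodType K} (h : X -> P) w : linear h -> linear (fun x => lmulT PC (h x) w).
Proof. move=> Hh; rewrite /lmulT; lin. Qed.
Ltac lin_hook ::= lazymatch goal with
 | |- GRing.linear_for _ (fun x => lmulT _ _ _) => apply: lin_lmulT_l; lin
 end.

Local Notation gam c d := (eps (delta (tens CC c d))).

Lemma lmulT_tens p a c : lmulT PC p (tens PC a c) = tens PC (p * a) c.
Proof. by rewrite /lmulT; tt. Qed.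
Lemma lmulT_mul p q w : lmulT PC (p * q) w = lmulT PC p (lmulT PC q w).
Proof.
move: w; apply: tuniq; side.
by move=> u v; rewrite !lmulT_tens mulrA.
Qed.
Lemma lmulT1 w : lmulT PC 1 w = w.
Proof. move: w; apply: tuniq; side. by move=> u v; rewrite lmulT_tens mul1r. Qed.

Lemma gamD {W : lmodType K} (v : W) c : tlift CC (fun a b => gam a b *: v) (Delta c) = eps c *: v.
Proof.
rewrite (tlift_self _ (G := fun w => (eps (delta w) : K) *: v)); last lin.
by rewrite HdD.
Qed.

Lemma counitl {W : lmodType K} (h : C -> W) c : linear h ->
  tlift CC (fun a b => eps a *: h b) (Delta c) = h c.
Proof.
move=> Hh; rewrite -{2}(Hcl c) (tlift_comp _ (G := h)); side.
by apply: tlift_eqx => // a b; rewrite linZ.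
Qed.
Lemma counitr {W : lmodType K} (h : C -> W) c : linear h ->
  tlift CC (fun a b => eps b *: h a) (Delta c) = h c.
Proof.
move=> Hh; rewrite -{2}(Hcr c) (tlift_comp _ (G := h)); side.
by apply: tlift_eqx => // a b; rewrite linZ.
Qed.

Lemma G2l {W : lmodType K} (h : C -> W) c d : linear h ->
  tlift CC (fun c1 c2 => gam c2 d *: h c1) (Delta c) = h (delta (tens CC c d)).
Proof.
move=> Hh; rewrite -(counitr h (delta (tens CC c d)) Hh) Hdleft (tlift_comp _ (G := tlift CC _)); side.
by apply: tlift_eqx => // a b; tt.
Qed.
Lemma G2r {W : lmodType K} (h : C -> W) c d : linear h ->
  tlift CC (fun d1 d2 => gam c d1 *: h d2) (Delta d) = h (delta (tens CC c d)).
Proof.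
move=> Hh; rewrite -(counitl h (delta (tens CC c d)) Hh) Hdright (tlift_comp _ (G := tlift CC _)); side.
by apply: tlift_eqx => // a b; tt.
Qed.

Lemma coass3 {W : lmodType K} (F : C -> C -> C -> W) c :
  (forall a b, linear (F a b)) -> (forall a c, linear (fun b => F a b c)) ->
  (forall b c, linear (fun a => F a b c)) ->
  tlift CC (fun c1 c2 => tlift CC (fun d1 d2 => F d1 d2 c2) (Delta c1)) (Delta c) =
  tlift CC (fun c1 c2 => tlift CC (fun d1 d2 => F c1 d1 d2) (Delta c2)) (Delta c).
Proof.
move=> H1 H2 H3.
have := congr1 (tlift CCC (fun a t => tlift CC (F a) t)) (Hcoass c).
rewrite !(tlift_comp _ (G := tlift CCC _)); side.
under tlift_eq => a b do [rewrite tlift_tens; side].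
under [in RHS]tlift_eq => a b do [rewrite (tlift_comp _ (G := tlift CCC _)); side].
under [in RHS]tlift_eq => a b do [under tlift_eq => x y do [rewrite !tlift_tens; side]].
by move=> ->.
Qed.

Lemma rcoass3 {W : lmodType K} (G : P -> C -> C -> W) p :
  (forall a b, linear (G a b)) -> (forall a c, linear (fun b => G a b c)) ->
  (forall b c, linear (fun a => G a b c)) ->
  tlift PC (fun p0 p1 => tlift PC (fun a b => G a b p1) (rho p0)) (rho p) =
  tlift PC (fun p0 p1 => tlift CC (G p0) (Delta p1)) (rho p).
Proof.
move=> H1 H2 H3.
have := congr1 (tlift PCC (fun a t => tlift CC (G a) t)) (Hrco p).
rewrite !(tlift_comp _ (G := tlift PCC _)); side.
under [in RHS]tlift_eq => a b do [rewrite tlift_tens; side].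
under tlift_eq => a b do [rewrite (tlift_comp _ (G := tlift PCC _)); side].
under tlift_eq => a b do [under tlift_eq => x y do [rewrite !tlift_tens; side]].
by [].
Qed.

Lemma E3_3 {W : lmodType K} (G : P -> C -> C -> W) c p :
  (forall a b, linear (G a b)) -> (forall a c, linear (fun b => G a b c)) ->
  (forall b c, linear (fun a => G a b c)) ->
  tlift PC (fun pa ca => tlift CC (G pa) (Delta ca)) (psi (tens CP c p)) =
  tlift CC (fun c1 c2 => tlift PC (fun pa ca => tlift PC (fun pab cb => G pab cb ca)
     (psi (tens CP c1 pa))) (psi (tens CP c2 p))) (Delta c).
Proof.
move=> H1 H2 H3.
have := congr1 (tlift PCC (fun a t => tlift CC (G a) t)) (HE3 c p).
rewrite !(tlift_comp _ (G := tlift PCC _)); side.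
under tlift_eq => a b do [rewrite tlift_tens; side].
under [in RHS]tlift_eq => a b do [rewrite (tlift_comp _ (G := tlift PCC _)); side].
under [in RHS]tlift_eq => a b do [under tlift_eq => x y do [rewrite (tlift_comp _ (G := tlift PCC _)); side]].
under [in RHS]tlift_eq => a b do [under tlift_eq => x y do [under tlift_eq => u v do [rewrite !tlift_tens; side]]].
by [].
Qed.

Lemma tensZl {U V : lmodType K} (T : tensor U V) (k : K) u v : tens T (k *: u) v = k *: tens T u v.
Proof. by rewrite (linZ (lin_tens_l T v)). Qed.
Lemma tensZr {U V : lmodType K} (T : tensor U V) (k : K) u v : tens T u (k *: v) = k *: tens T u v.
Proof. by rewrite (linZ (lin_tens_r T u)). Qed.

Lemma rho1 : rho 1 = tens PC 1 e.
Proof. by rewrite Hcop HE2. Qed.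
Lemma phi1 c : phi (tens PC 1 c) = tens CP c 1.
Proof. by rewrite -HE2 Hpsiphi. Qed.
Lemma gamee : gam e e = 1.
Proof. by rewrite -HDe HdD Hee. Qed.

Local Notation Ep c p := (tlift PC (fun p0 p1 => gam p1 c *: p0) (rho p)).
Local Notation lam p := (phi (tens PC p e)).
Local Notation Elp c p := (tlift CP (fun d q => gam c d *: q) (lam p)).

Lemma rho_Ep c b : rho (Ep c b) = tlift CC (fun c1 c2 => tens PC (Ep c1 b) c2) (Delta c).
Proof.
rewrite (tlift_comp _ (G := rho)); side.
transitivity (tlift PC (fun p0 p1 => tlift PC (fun a x => gam p1 c *: tens PC a x) (rho p0)) (rho b)).
  apply: tlift_eqx => // p0 p1; rewrite linZ //.
  by rewrite tlift_scale.
rewrite (rcoass3 (fun a x y => gam y c *: tens PC a x)); side.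
under tlift_eq => p0 p1 do [rewrite (G2l (tens PC p0)); side].
under [in RHS]tlift_eq => c1 c2 do [rewrite (tlift_comp _ (G := fun z => tens PC z c2)); side].
rewrite tlift_swap; side.
apply: tlift_eqx => // p0 p1.
under tlift_eq => c1 c2 do rewrite tensZl.
by rewrite (G2r (tens PC p0)); side.
Qed.

Local Notation cant := (cantilde PP PC rho).
Lemma cant_tens a b : cant (tens PP a b) = lmulT PC a (rho b).
Proof. by rewrite /cantilde; tt. Qed.
Lemma cant_lin : linear cant.
Proof. rewrite /cantilde; lin. Qed.

Definition tau' c := tau c + eps c *: (tens PP 1 1 - tau e).
Lemma tau'_lin : linear tau'.
Proof. rewrite /tau'; lin. Qed.
Ltac lin_extra ::= first [apply: lmulT_lin | apply: Hphil | apply: cant_lin | apply: tau'_lin].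

Lemma tau'_can c : cant (tau' c) = tens PC 1 c.
Proof.
rewrite /tau' (linD cant_lin) (linZ cant_lin) (linB cant_lin) Htc cant_tens rho1 lmulT_tens mul1r.
by rewrite Htc subrr scaler0 addr0.
Qed.
Lemma tau'_e : tau' e = tens PP 1 1.
Proof. by rewrite /tau' Hee scale1r addrC subrK. Qed.

Definition l1 c := tlift CC (fun c1 c2 => tlift PP (fun a b => tens PP a (Ep c2 b)) (tau' c1)) (Delta c).
Lemma l1_lin : linear l1.
Proof. rewrite /l1; lin. Qed.
Ltac lin_extra ::= first [apply: lmulT_lin | apply: Hphil | apply: cant_lin | apply: tau'_lin
  | apply: l1_lin].

Lemma Wcant d z w : tlift PP (fun a b => tens PC (a * Ep d b) z) w =
  tlift PC (fun p c => gam c d *: tens PC p z) (cant w).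
Proof.
move: w; apply: tuniq; side.
move=> a b; rewrite tlift_tens; side; rewrite cant_tens.
rewrite (tlift_comp _ (G := fun x => a * x)); side.
rewrite (tlift_comp _ (G := fun x => tens PC x z)); side.
rewrite /lmulT (tlift_comp _ (G := tlift PC _)); side.
apply: tlift_eqx => // p c; rewrite tlift_tens; side.
by rewrite -scalerAr tensZl.
Qed.

Lemma cant_l1 c : cant (l1 c) = tens PC 1 c.
Proof.
rewrite /l1 (tlift_comp _ (G := cant)); side.
under tlift_eq => c1 c2 do [rewrite (tlift_comp _ (G := cant)); side].
under tlift_eq => c1 c2 do [under tlift_eq => a b do rewrite cant_tens rho_Ep].
under tlift_eq => c1 c2 do [under tlift_eq => a b do [rewrite (tlift_comp _ (G := lmulT PC a)); side]].
under tlift_eq => c1 c2 do [under tlift_eq => a b do [under tlift_eq => d1 d2 do rewrite lmulT_tens]].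
under tlift_eq => c1 c2 do [rewrite tlift_swap; side].
under tlift_eq => c1 c2 do [under tlift_eq => d1 d2 do rewrite Wcant tau'_can].
under tlift_eq => c1 c2 do [under tlift_eq => d1 d2 do [rewrite tlift_tens; side]].
rewrite -(coass3 (fun a b c => gam a b *: tens PC 1 c)); side.
under tlift_eq => c1 c2 do rewrite gamD.
by rewrite (counitl (tens PC 1)); side.
Qed.

Lemma l1_rcol d : tlift PP (fun a b => tens PPC a (rho b)) (l1 d) =
  tlift CC (fun d1 d2 => tlift PP (fun a b => tens PPC a (tens PC b d2)) (l1 d1)) (Delta d).
Proof.
rewrite /l1 (tlift_comp _ (G := tlift PP _)); side.
under tlift_eq => c1 c2 do [rewrite (tlift_comp _ (G := tlift PP _)); side].
under tlift_eq => c1 c2 do [under tlift_eq => a b do [rewrite tlift_tens; side; rewrite rho_Ep]].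
under tlift_eq => c1 c2 do [under tlift_eq => a b do [rewrite (tlift_comp _ (G := tens PPC a)); side]].
under tlift_eq => c1 c2 do [rewrite tlift_swap; side].
under [in RHS]tlift_eq => d1 d2 do [rewrite (tlift_comp _ (G := tlift PP _)); side].
under [in RHS]tlift_eq => d1 d2 do [under tlift_eq => c1 c2 do [rewrite (tlift_comp _ (G := tlift PP _)); side]].
under [in RHS]tlift_eq => d1 d2 do [under tlift_eq => c1 c2 do [under tlift_eq => a b do [rewrite tlift_tens; side]]].
by rewrite (coass3 (fun c1 x y => tlift PP (fun a b => tens PPC a (tens PC (Ep x b) y)) (tau' c1))); side.
Qed.

Definition ell c := tlift CC (fun c1 c2 => tlift PP (fun x y => tens PP (Elp c1 x) y) (l1 c2)) (Delta c).
Lemma ell_lin : linear ell.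
Proof. rewrite /ell; lin. Qed.
Ltac lin_extra ::= first [apply: lmulT_lin | apply: Hphil | apply: cant_lin | apply: tau'_lin
  | apply: l1_lin | apply: ell_lin].

Lemma ell_rcol_inner c1 d : tlift PP (fun x y => tens PPC (Elp c1 x) (rho y)) (l1 d) =
  tlift CC (fun d1 d2 => tlift PP (fun a b => tens PPC (Elp c1 a) (tens PC b d2)) (l1 d1)) (Delta d).
Proof.
transitivity (tlift PPC (fun a w => tens PPC (Elp c1 a) w) (tlift PP (fun a b => tens PPC a (rho b)) (l1 d))).
  rewrite (tlift_comp _ (G := tlift PPC _)); side.
  by apply: tlift_eqx => // a b; rewrite tlift_tens; side.
rewrite l1_rcol (tlift_comp _ (G := tlift PPC _)); side.
apply: tlift_eqx => // d1 d2; rewrite (tlift_comp _ (G := tlift PPC _)); side.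
by apply: tlift_eqx => // a b; rewrite tlift_tens; side.
Qed.

Lemma ell_rcol c : tlift PP (fun a b => tens PPC a (rho b)) (ell c) =
  tlift CC (fun c1 c2 => tlift PP (fun a b => tens PPC a (tens PC b c2)) (ell c1)) (Delta c).
Proof.
rewrite /ell (tlift_comp _ (G := tlift PP _)); side.
under tlift_eq => c1 c2 do [rewrite (tlift_comp _ (G := tlift PP _)); side].
under tlift_eq => c1 c2 do [under tlift_eq => a b do [rewrite tlift_tens; side]].
under tlift_eq => c1 c2 do rewrite ell_rcol_inner.
under [in RHS]tlift_eq => d1 d2 do [rewrite (tlift_comp _ (G := tlift PP _)); side].
under [in RHS]tlift_eq => d1 d2 do [under tlift_eq => c1 c2 do [rewrite (tlift_comp _ (G := tlift PP _)); side]].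
under [in RHS]tlift_eq => d1 d2 do [under tlift_eq => c1 c2 do [under tlift_eq => a b do [rewrite tlift_tens; side]]].
by rewrite (coass3 (fun x1 x2 c2 => tlift PP (fun x y => tens PPC (Elp x1 x) (tens PC y c2)) (l1 x2))); side.
Qed.


Local Notation Gm c' z v := (tlift CP (fun d q => gam c' d *: tens PC q z) v).
Definition Mm c' := tlift PCC (fun a yz => tlift CC (fun y z => Gm c' z (phi (tens PC a y))) yz).
Lemma Mm_lin c' : linear (Mm c').
Proof. rewrite /Mm; lin. Qed.
Definition Epp c' w := Mm c' (tlift PC (fun p d => tens PCC p (Delta d)) w).
Lemma Epp_lin c' : linear (Epp c').
Proof. rewrite /Epp; apply: lin_comp; [apply: Mm_lin | lin]. Qed.
Ltac lin_extra ::= first [apply: lmulT_lin | apply: Hphil | apply: cant_lin | apply: tau'_lin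
  | apply: l1_lin | apply: ell_lin | apply: Mm_lin | apply: Epp_lin].

Lemma Mm_tens c' a y z : Mm c' (tens PCC a (tens CC y z)) = Gm c' z (phi (tens PC a y)).
Proof. by rewrite /Mm; tt; tt. Qed.

Lemma E3M c' f q : Epp c' (psi (tens CP f q)) =
  tlift CC (fun f1 f2 => gam c' f1 *: psi (tens CP f2 q)) (Delta f).
Proof.
rewrite /Epp HE3 (tlift_comp _ (G := Mm c')); side.
apply: tlift_eqx => // c1 c2.
rewrite (tlift_comp _ (G := Mm c')); side.
under tlift_eq => pa ca do [rewrite (tlift_comp _ (G := Mm c')); side].
under tlift_eq => pa ca do [under tlift_eq => pab cb do rewrite Mm_tens].
have H : forall (z : C) w, tlift PC (fun a b => Gm c' z (phi (tens PC a b))) w = Gm c' z (phi w).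
  move=> z; apply: tuniq; side; by move=> a b; tt.
under tlift_eq => pa ca do [rewrite H Hpsiphi tlift_tens; side].
by rewrite tlift_scale.
Qed.

Lemma K0 c' x : tlift CP (fun f q => tlift CC (fun f1 f2 => gam c' f1 *: psi (tens CP f2 q)) (Delta f)) (lam x)
  = tens PC (Elp c' x) e.
Proof.
under tlift_eq => f q do rewrite -E3M.
have H : forall w, tlift CP (fun f q => Epp c' (psi (tens CP f q))) w = Epp c' (psi w).
  apply: tuniq; side; by move=> a b; tt.
rewrite H Hphipsi /Epp tlift_tens; side; rewrite HDe Mm_tens.
rewrite (tlift_comp _ (G := fun z => tens PC z e)); side.
by apply: tlift_eqx => // d q; rewrite tensZl.
Qed.

Lemma K1 c' x : lam (Elp c' x) = tlift CC (fun d1 d2 => tens CP d1 (Elp d2 x)) (Delta c').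
Proof.
apply: (can_inj Hpsiphi); rewrite Hphipsi.
rewrite (tlift_comp _ (G := psi)); side.
under [in RHS]tlift_eq => d1 d2 do [rewrite (tlift_comp _ (G := fun q => psi (tens CP d1 q))); side].
under [in RHS]tlift_eq => d1 d2 do [under tlift_eq => f q do rewrite tensZr (linZ Hpl)].
rewrite tlift_swap; side.
rewrite -K0; apply: tlift_eqx => // f q.
by rewrite (G2l (fun d => psi (tens CP d q))) ?(G2r (fun d => psi (tens CP d q))); side.
Qed.

Local Notation Rm y w := (tlift PC (fun pa ca => lmulT PC pa (psi (tens CP ca y))) w).

Lemma Lp c' x y : lmulT PC (Elp c' x) (rho y) = Epp c' (lmulT PC x (rho y)).
Proof.
have S1 : lmulT PC x (rho y) = tlift CP (fun f q => psi (tens CP f (q * y))) (lam x).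
  under [in RHS]tlift_eq => f q do rewrite HE1.
  have H : forall w, tlift CP (fun f q => Rm y (psi (tens CP f q))) w = Rm y (psi w).
    apply: tuniq; side; by move=> a b; tt.
  by rewrite H Hphipsi tlift_tens; side; rewrite Hcop.
rewrite S1 (tlift_comp _ (G := Epp c')); side.
under [in RHS]tlift_eq => f q do rewrite E3M.
under [in RHS]tlift_eq => f q do [under tlift_eq => f1 f2 do rewrite HE1].
transitivity (Rm y (tens PC (Elp c' x) e)).
  by rewrite tlift_tens; side; rewrite Hcop.
rewrite -K0 (tlift_comp _ (G := tlift PC _)); side.
apply: tlift_eqx => // f q; rewrite (tlift_comp _ (G := tlift PC _)); side.
by apply: tlift_eqx => // f1 f2; rewrite linZ; side.
Qed.

Lemma Epp1 c1 c2 : Epp c1 (tens PC 1 c2) = tlift CC (fun y z => gam c1 y *: tens PC 1 z) (Delta c2).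
Proof.
rewrite /Epp tlift_tens; side; rewrite /Mm tlift_tens; side.
by apply: tlift_eqx => // y z; rewrite phi1 tlift_tens; side.
Qed.

Lemma cant_ell c : cant (ell c) = tens PC 1 c.
Proof.
rewrite /ell (tlift_comp _ (G := cant)); side.
under tlift_eq => c1 c2 do [rewrite (tlift_comp _ (G := cant)); side].
under tlift_eq => c1 c2 do [under tlift_eq => x y do rewrite cant_tens Lp -cant_tens].
have H : forall c1 w, tlift PP (fun x y => Epp c1 (cant (tens PP x y))) w = Epp c1 (cant w).
  move=> c1; apply: tuniq; side; by move=> a b; tt.
under tlift_eq => c1 c2 do rewrite H cant_l1 Epp1.
rewrite -(coass3 (fun a b c => gam a b *: tens PC 1 c)); side.
under tlift_eq => c1 c2 do rewrite gamD.
by rewrite (counitl (tens PC 1)); side.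
Qed.

Lemma ell_e : ell e = tens PP 1 1.
Proof.
rewrite /ell HDe tlift_tens; side.
rewrite {1}/l1 HDe tlift_tens; side.
rewrite tau'_e tlift_tens; side.
rewrite tlift_tens; side.
rewrite rho1 phi1 !tlift_tens; side.
by rewrite gamee !scale1r.
Qed.

Lemma ell_lcol c : tlift PP (fun a b => tlift CP (fun c' a' => tens CPP c' (tens PP a' b))
     (phi (tens PC a e))) (ell c) = tlift CC (fun c1 c2 => tens CPP c1 (ell c2)) (Delta c).
Proof.
rewrite /ell (tlift_comp _ (G := tlift PP _)); side.
under tlift_eq => c1 c2 do [rewrite (tlift_comp _ (G := tlift PP _)); side].
under tlift_eq => c1 c2 do [under tlift_eq => x y do [rewrite tlift_tens; side; rewrite K1 (tlift_comp _ (G := tlift CP _)); side]].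
under tlift_eq => c1 c2 do [under tlift_eq => x y do [under tlift_eq => d1 d2 do [rewrite tlift_tens; side]]].
under tlift_eq => c1 c2 do [rewrite tlift_swap; side].
rewrite (coass3 (fun c1 d1 d2 => tlift PP (fun x y => tens CPP c1 (tens PP (Elp d1 x) y)) (l1 d2))); side.
apply: tlift_eqx => // c1 c2.
rewrite (tlift_comp _ (G := tens CPP c1)); side.
apply: tlift_eqx => // d1 d2; rewrite (tlift_comp _ (G := tens CPP c1)); side.
Qed.

Local Notation Ge w := (tlift PC (fun p0 p1 => gam p1 e *: p0) w).

Lemma CL c : tlift CC (fun c1 c2 => tlift PP (fun a b => tens PP (Ge (psi (tens CP c1 a))) b) (ell c2)) (Delta c)
  = ell c.
Proof.
pose N := tlift CPP (fun c' w => tlift PP (fun a b => tens PP (Ge (psi (tens CP c' a))) b) w).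
transitivity (N (tlift CC (fun c1 c2 => tens CPP c1 (ell c2)) (Delta c))).
  rewrite /N (tlift_comp _ (G := tlift CPP _)); side.
  by apply: tlift_eqx => // c1 c2; rewrite tlift_tens; side.
rewrite -ell_lcol /N (tlift_comp _ (G := tlift CPP _)); side.
under tlift_eq => a b do [rewrite (tlift_comp _ (G := tlift CPP _)); side].
under tlift_eq => a b do [under tlift_eq => c' a' do [rewrite !tlift_tens; side]].
have H : forall b w, tlift CP (fun c' a' => tens PP (Ge (psi (tens CP c' a'))) b) w = tens PP (Ge (psi w)) b.
  move=> b; apply: tuniq; side; by move=> u v; tt.
under tlift_eq => a b do [rewrite H Hphipsi tlift_tens; side; rewrite gamee scale1r].
by rewrite tlift_id.
Qed.

Lemma GammaL s w : Ge (lmulT PC s w) = s * Ge w.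
Proof.
move: w; apply: tuniq; side => a c.
rewrite lmulT_tens !tlift_tens; side.
by rewrite scalerAr.
Qed.

Lemma chain {W : lmodType K} (Th : P -> P -> W) q :
  (forall x, linear (Th x)) -> (forall y, linear (fun x => Th x y)) ->
  tlift PC (fun q0 q1 => tlift PP (fun a b => Th (q0 * a) b) (ell q1)) (rho q) =
  tlift PC (fun q0 q1 => tlift PP (fun a b => Th (Ge (rho (q0 * a))) b) (ell q1)) (rho q).
Proof.
move=> HT1 HT2.
under tlift_eq => q0 q1 do rewrite -(CL q1).
under tlift_eq => q0 q1 do [rewrite (tlift_comp _ (G := tlift PP _)); side].
under tlift_eq => q0 q1 do [under tlift_eq => c1 c2 do [rewrite (tlift_comp _ (G := tlift PP _)); side]].
under tlift_eq => q0 q1 do [under tlift_eq => c1 c2 do [under tlift_eq => a b do [rewrite tlift_tens; side]]].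
rewrite -(rcoass3 (fun s c1 c2 => tlift PP (fun a b => Th (s * Ge (psi (tens CP c1 a))) b) (ell c2))); side.
apply: tlift_eqx => // q0 q1.
rewrite tlift_swap; side.
apply: tlift_eqx => // a b.
rewrite Hrm (tlift_comp _ (G := tlift PC (fun p0 p1 => gam p1 e *: p0))); side.
under [in RHS]tlift_eq => s c do rewrite GammaL.
by rewrite (tlift_comp _ (G := fun z => Th z b)); side.
Qed.

Lemma rho_Ge p : rho (Ge (rho p)) = tens PC (Ge (rho p)) e.
Proof. by rewrite rho_Ep HDe tlift_tens; side. Qed.

Lemma coinv_of b : rho b = tens PC b e -> coinv PC rho b.
Proof. by move=> Hb p; rewrite Hrm Hb tlift_tens; side; rewrite Hcop. Qed.

Lemma mu_ell c : tlift PP (fun a b => a * b) (ell c) = eps c *: 1.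
Proof.
have H1 : forall a w, tlift PC (fun p d => eps d *: p) (lmulT PC a w) = a * tlift PC (fun p d => eps d *: p) w.
  move=> a; apply: tuniq; side => p d.
  by rewrite lmulT_tens !tlift_tens; side; rewrite scalerAr.
have Hm : forall w, tlift PC (fun p d => eps d *: p) (cant w) = tlift PP (fun a b => a * b) w.
  apply: tuniq; side => a b.
  by rewrite cant_tens H1 Hrcu tlift_tens; side.
by rewrite -Hm cant_ell tlift_tens; side.
Qed.

Ltac lin_hook ::= match goal with
 | |- GRing.linear_for _ (fun x => lmulT _ _ _) => apply: lin_lmulT_l; lin
 | |- GRing.linear_for _ (fun x => btens _ _ _) => first [apply: lin_btensl_c; lin | apply: lin_btensr_c; lin]
 end.

Lemma can_bal : balanced (B := coinv PC rho) (fun p p' => lmulT PC p (rho p')).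
Proof. by move=> p b q Hb; rewrite Hb lmulT_mul. Qed.
Lemma can_spec : linear (can PBP PC rho) /\ forall p q, can PBP PC rho (btens PBP p q) = lmulT PC p (rho q).
Proof. rewrite /can; apply: btlift_spec; [bil | exact: can_bal]. Qed.
Lemma can_lin : linear (can PBP PC rho).
Proof. by case: can_spec. Qed.
Lemma can_btens p q : can PBP PC rho (btens PBP p q) = lmulT PC p (rho q).
Proof. by case: can_spec => _ ->. Qed.

Definition canInv (w : tsp PC) : bsp PBP := tlift PC (fun p c => tlift PP (fun a b => btens PBP (p * a) b) (ell c)) w.
Lemma canInv_lin : linear canInv.
Proof. rewrite /canInv; lin. Qed.

Lemma brmul_spec p : linear (brmul PBP p) /\ forall a b, brmul PBP p (btens PBP a b) = btens PBP a (b * p).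
Proof. rewrite /brmul; apply: btlift_spec; [bil | by move=> a b q Hb; rewrite btbal // mulrA]. Qed.
Lemma brmul_lin p : linear (brmul PBP p).
Proof. by case: (brmul_spec p). Qed.
Lemma brmul_btens p a b : brmul PBP p (btens PBP a b) = btens PBP a (b * p).
Proof. by case: (brmul_spec p) => _ ->. Qed.
Lemma brmul_lin_p {X : lmodType K} (h : X -> P) x : linear h -> linear (fun y => brmul PBP (h y) x).
Proof.
move=> Hh; rewrite /brmul; apply: lin_btlift_param.
- move=> y; bil.
- by move=> y a b q Hb; rewrite btbal // mulrA.
- move=> u v; lin.
Qed.

Ltac lin_extra ::= first [apply: lmulT_lin | apply: Hphil | apply: cant_lin | apply: tau'_lin
  | apply: l1_lin | apply: ell_lin | apply: Mm_lin | apply: Epp_lin | apply: can_lin | apply: canInv_lin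
  | apply: brmul_lin | apply: lin_btens_r | apply: lin_btens_l].
Ltac lin_hook ::= match goal with
 | |- GRing.linear_for _ (fun x => lmulT _ _ _) => apply: lin_lmulT_l; lin
 | |- GRing.linear_for _ (fun x => btens _ _ _) => first [apply: lin_btensl_c; lin | apply: lin_btensr_c; lin]
 | |- GRing.linear_for _ (fun x => brmul _ _ _) => apply: brmul_lin_p; lin
 end.

Lemma can_canInv w : can PBP PC rho (canInv w) = w.
Proof.
move: w; apply: tuniq; side => p c.
rewrite /canInv tlift_tens; side.
rewrite (tlift_comp _ (G := can PBP PC rho)); side.
under tlift_eq => a b do rewrite can_btens lmulT_mul.
transitivity (lmulT PC p (cant (ell c))).
  rewrite /cantilde (tlift_comp _ (G := lmulT PC p)); side.
by rewrite cant_ell lmulT_tens mulr1.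
Qed.

Lemma canInv_can x : canInv (can PBP PC rho x) = x.
Proof.
move: x; apply: btuniq; side => p q.
rewrite can_btens.
have H : forall w, canInv (lmulT PC p w) =
   tlift PC (fun q0 q1 => tlift PP (fun a b => btens PBP (p * (q0 * a)) b) (ell q1)) w.
  apply: tuniq; side => q0 q1.
  rewrite lmulT_tens /canInv !tlift_tens; side.
  by apply: tlift_eqx => // a b; rewrite mulrA.
rewrite H (chain (fun x b => btens PBP (p * x) b)); side.
under tlift_eq => q0 q1 do [under tlift_eq => a b do [rewrite btbal; last (apply: coinv_of; apply: rho_Ge)]].
transitivity (btens PBP p (tlift PC (fun q0 q1 => tlift PP (fun a b => Ge (rho (q0 * a)) * b) (ell q1)) (rho q))).
  rewrite (tlift_comp _ (G := btens PBP p)); side.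
  by apply: tlift_eqx => // q0 q1; rewrite (tlift_comp _ (G := btens PBP p)); side.
congr (btens PBP p _).
rewrite -(chain (fun x b => x * b)); side.
under tlift_eq => q0 q1 do [under tlift_eq => a b do rewrite -mulrA].
under tlift_eq => q0 q1 do [rewrite -(tlift_comp _ (G := fun z => q0 * z)); side].
under tlift_eq => q0 q1 do rewrite mu_ell -scalerAr mulr1.
exact: Hrcu.
Qed.

Lemma RmL y a w : lmulT PC a (Rm y w) = Rm y (lmulT PC a w).
Proof.
move: w; apply: tuniq; side => p c.
by rewrite lmulT_tens !tlift_tens; side; rewrite lmulT_mul.
Qed.

Lemma psi_can_eq w : psi_can PBP CP PC rho canInv w = psi w.
Proof.
rewrite /psi_can; move: w; apply: tuniq; side => c p.
rewrite tlift_tens; side; rewrite /canInv tlift_tens; side.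
rewrite (tlift_comp _ (G := brmul PBP p)); side.
rewrite (tlift_comp _ (G := can PBP PC rho)); side.
under tlift_eq => a b do rewrite brmul_btens can_btens mul1r Hrm RmL -cant_tens.
have H : forall w, tlift PP (fun a b => Rm p (cant (tens PP a b))) w = Rm p (cant w).
  apply: tuniq; side; by move=> u v; tt.
by rewrite H cant_ell tlift_tens; side; rewrite lmulT1.
Qed.

Lemma main_sec : bijective (can PBP PC rho) /\ principal CC PP PC CP PPC CPP PBP Delta rho e.
Proof.
split; first by exists canInv; [exact: canInv_can | exact: can_canInv].
exists canInv; split.
- exact: canInv_can.
- exact: can_canInv.
- by move=> p; rewrite psi_can_eq Hcop.
exists phi; split.
- by move=> w; rewrite psi_can_eq Hpsiphi.
- by move=> w; rewrite psi_can_eq Hphipsi.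
exists ell; split.
- exact: ell_lin.
- exact: ell_e.
- exact: cant_ell.
- exact: ell_rcol.
- exact: ell_lcol.
Qed.

End Main.

Theorem mainTheorem9 (K : fieldType) (P : algType K) (C : lmodType K)
  (CC : tensor C C) (CCC : tensor C CC) (CP : tensor C P) (PC : tensor P C)
  (PP : tensor P P) (PCC : tensor P CC) (PPC : tensor P PC) (CPP : tensor C PP)
  (Delta : C -> tsp CC) (eps : C -> K^o) (psi : tsp CP -> tsp PC) (rho : P -> tsp PC)
  (e : C) (PBP : btensor (coinv PC rho)) :
  is_coalgebra CC CCC Delta eps ->
  coseparable CC Delta ->
  grouplike CC Delta eps e ->
  is_entwining CC PCC CP PC Delta eps psi ->
  is_entwined_coaction CC PCC CP PC Delta eps psi rho ->
  copointed CP PC psi rho e ->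
  bijective psi ->
  (exists tau : C -> tsp PP, colifting PP PC rho tau) ->
  bijective (can PBP PC rho) /\
  principal CC PP PC CP PPC CPP PBP Delta rho e.
Proof.
move=> [HDl Hel Hcoass Hcl Hcr] [delta [Hdl Hdleft Hdright HdD]] [HDe Hee]
  [Hpl HE1 HE2 HE3 HE4] [Hrl Hrco Hrcu Hrm] Hcop [phi Hpsiphi Hphipsi] [tau [Htl Htc]].
eapply main_sec; eassumption.
Qed.
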